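(* Let $a, n \in \mathbb{N}$ and let $(F, M, \mathcal{R}, c)$ be an instance of the feasibility problem such that one of the following holds: (i) $c_r \in \{a, na\}$ for all $r \in \mathcal{R}$ and $R_a \ge n-1$; or (ii) $c_r \in \{a, 2a, \dots, na\}$ for all $r \in \mathcal{R}$ and $R_{ia} > 0$ for every $i = 1, \dots, n$; or (iii) $c_r \in \{2^0 a, 2^1 a, \dots, 2^n a\}$ for all $r \in \mathcal{R}$ and $R_{2^i a} > 0$ for every $i = 0, \dots, n$. Then the instance is feasible if and only if $$\left\lceil \frac{F}{a} \right\rceil + \left\lceil \frac{M}{a} \right\rceil \le \frac{1}{a} \sum_{r \in \mathcal{R}} c_r.$$
   Context: An instance $(F, M, \mathcal{R}, c)$ of the feasibility problem (of patient-to-room assignment with gender separation, for a single time period) consists of nonnegative integers $F$ (number of female patients) and $M$ (number of male patients), a finite set $\mathcal{R}$ of rooms, and a capacity $c_r \in \mathbb{N}$ (positive integer) for each room $r \in \mathcal{R}$. The instance is called feasible if there exists a subset $S \subseteq \mathcal{R}$ with $\sum_{r \in S} c_r \ge F$ and $\sum_{r \in \mathcal{R} \setminus S} c_r \ge M$. For $k \in \mathbb{N}$, $R_k := |\{ r \in \mathcal{R} : c_r = k\}|$ denotes the number of rooms of capacity $k$. *)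

(* Defs.v *)
From mathcomp Require Import all_boot all_order all_algebra.
Set Implicit Arguments. Unset Strict Implicit. Unset Printing Implicit Defensive.
Import Order.TTheory GRing.Theory Num.Theory.

(* An instance (F, M, R, c): rooms are the elements of a finite type rT,
   c : rT -> nat with c r > 0 for all r. *)

Definition feasible (rT : finType) (c : rT -> nat) (F M : nat) : Prop :=
  exists S : {set rT},
    F <= \sum_(r in S) c r /\ M <= \sum_(r in ~: S) c r.

Definition Rk (rT : finType) (c : rT -> nat) (k : nat) : nat :=
  #|[set r | c r == k]|.

(* Main.v *)
Require Import Defs.
From mathcomp Require Import all_boot all_order all_algebra.
From mathcomp Require Import zify.
Import Order.TTheory GRing.Theory Num.Theory.
Set Implicit Arguments. Unset Strict Implicit.

Section Comb.
Variables (rT : finType) (d : rT -> nat).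

Lemma subP_le (P Q : pred rT) : (forall i, P i -> Q i) ->
  \sum_(i | P i) d i <= \sum_(i | Q i) d i.
Proof.
move=> H; rewrite [X in _ <= X](bigID P) /=.
apply: leq_trans (leq_addr _ _); apply: eq_leq; apply: eq_bigl => i.
by case Pi: (P i); rewrite ?andbT ?andbF ?H.
Qed.

Lemma one_le (P : pred rT) y : P y -> d y <= \sum_(i | P i) d i.
Proof. by move=> Py; rewrite (bigD1 y) //= leq_addr. Qed.

Definition complete (A : {set rT}) := forall s, s <= \sum_(r in A) d r ->
  exists2 S : {set rT}, S \subset A & \sum_(r in S) d r = s.

Lemma complete0 : complete set0.
Proof.
move=> s; rewrite big_set0 leqn0 => /eqP->; exists set0; first exact: sub0set.
by rewrite big_set0.
Qed.

Lemma add1 A x : complete A -> x \notin A -> d x <= (\sum_(r in A) d r).+1 ->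
  complete (x |: A).
Proof.
move=> cA xA dx s; rewrite big_setU1 //= => hs.
case: (leqP s (\sum_(r in A) d r)) => h.
  have [S SA <-] := cA s h; exists S => //; exact: subset_trans SA (subsetU1 _ _).
have [S SA eS] := cA (s - d x) ltac:(lia).
have xS : x \notin S by apply/negP => /(subsetP SA); rewrite (negbTE xA).
exists (x |: S); first by rewrite setUS.
rewrite big_setU1 //= eS; lia.
Qed.

Lemma grow B : complete B -> forall k (A : {set rT}), #|A :\: B| = k -> B \subset A ->
  (forall x, x \in A -> x \notin B -> d x <= (\sum_(r in B) d r).+1) -> complete A.
Proof.
move=> cB; elim=> [|k IH] A hk BA hx.
  have : A :\: B = set0 by apply/eqP; rewrite -cards_eq0 hk.
  move/eqP; rewrite setD_eq0 => AB.
  by have -> : A = B by apply/eqP; rewrite eqEsubset AB BA.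
have [x xAB] : exists x, x \in A :\: B by apply/card_gt0P; rewrite hk.
move: (xAB); rewrite inE => /andP[xB xA].
have eA : A = x |: (A :\ x) by rewrite setD1K.
have BA' : B \subset A :\ x.
  apply/subsetP => y yB; rewrite !inE (subsetP BA) // andbT.
  by apply/eqP => e; move: xB; rewrite -e yB.
have cA' : complete (A :\ x).
  apply: (IH) => //; last by move=> y; rewrite inE => /andP[_ yA]; exact: hx.
  have : A :\: B = x |: ((A :\ x) :\: B).
    apply/setP => y; rewrite !inE; case: (y =P x) => [->|]; by rewrite ?xB ?xA.
  move=> e; move: hk; rewrite e cardsU1 !inE eqxx /=; lia.
rewrite eA; apply: add1 => //; first by rewrite !inE eqxx.
apply: leq_trans (hx x xA xB) _; rewrite ltnS.
rewrite [X in _ <= X](big_setID B) /= (setIidPr BA'); exact: leq_addr.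
Qed.

Lemma threshold : (forall r, d r <= (\sum_(x | d x < d r) d x).+1) -> complete [set: rT].
Proof.
move=> H.
have key : forall v, complete [set r | d r <= v].
  elim=> [|v IH].
    apply: (grow complete0 (erefl _)); first exact: sub0set.
    by move=> x; rewrite inE leqn0 big_set0 => /eqP->.
  apply: (grow IH (erefl _)).
    by apply/subsetP => y; rewrite !inE => /leqW.
  move=> x; rewrite !inE => h1 h2.
  have ex : d x = v.+1 by lia.
  apply: leq_trans (H x) _; rewrite ltnS ex.
  by apply: eq_leq; apply: eq_bigl => y; rewrite inE ltnS.
have -> : [set: rT] = [set r | d r <= \max_i d i].
  by apply/setP => y; rewrite !inE leq_bigmax.
exact: key.
Qed.
End Comb.

Lemma ceil_le_nat (X a k : nat) : 0 < a ->
  ((Num.ceil ((X%:R / a%:R) : rat) <= k%:Z) = (X <= k * a)%N)%R.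
Proof.
move=> a0; rewrite ceil_le_int ler_pdivrMr ?ltr0n // -natrM.
by rewrite ler_nat.
Qed.

Lemma sum_scale (rT : finType) (c : rT -> nat) a (P : pred rT) :
  (forall r, c r = c r %/ a * a) ->
  \sum_(r | P r) c r = (\sum_(r | P r) (c r %/ a)) * a.
Proof. by move=> h; rewrite big_distrl /=; apply: eq_bigr => r _; rewrite -h. Qed.

Theorem mainTheorem2 (a n F M : nat) (rT : finType) (c : rT -> nat) :
  0 < a ->
  (forall r, 0 < c r) ->
  ( ((forall r, c r = a \/ c r = n * a) /\ n - 1 <= Rk c a)
    \/ ((forall r, exists2 i, 1 <= i <= n & c r = i * a) /\
        (forall i, 1 <= i <= n -> 0 < Rk c (i * a)))
    \/ ((forall r, exists2 i, i <= n & c r = 2 ^ i * a) /\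
        (forall i, i <= n -> 0 < Rk c (2 ^ i * a))) ) ->
  (feasible c F M <->
   ((Num.ceil ((F%:R / a%:R) : rat) + Num.ceil ((M%:R / a%:R) : rat))%:~R
      <= (a%:R)^-1 * (\sum_r c r)%:R :> rat)%R).
Proof.
move=> a0 cpos hcase.
pose d r := c r %/ a.
have hca : forall r, c r = d r * a.
  move=> r; rewrite /d; case: hcase => [[h _]|[[h _]|[h _]]].
  - by case: (h r) => ->; rewrite ?mulnK // divnn a0 mul1n.
  - by case: (h r) => i _ ->; rewrite mulnK.
  - by case: (h r) => i _ ->; rewrite mulnK.
have dpos : forall r, 0 < d r.
  by move=> r; have := cpos r; rewrite hca muln_gt0 => /andP[].
have getR : forall k, 0 < Rk c (k * a) -> exists y, d y = k.
  move=> k; rewrite /Rk => /card_gt0P [y]; rewrite inE => /eqP e.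
  by exists y; rewrite /d e mulnK.
have hcomp : complete d [set: rT].
  apply: threshold => r.
  case: hcase => [[h hR]|[[h hR]|[h hR]]].
  - case: (leqP (d r) 1) => [h1|dr1]; first by apply: leq_trans h1 _.
    have drn : d r = n.
      by case: (h r) => e; move: dr1; rewrite /d e ?mulnK // divnn a0.
    apply: leq_trans (_ : (Rk c a).+1 <= _); first by rewrite drn; lia.
    rewrite ltnS /Rk -sum1_card.
    apply: leq_trans (subP_le d (P := fun x => x \in [set r | c r == a]) _) => /=.
      by apply: leq_sum => i _; exact: dpos.
    move=> i; rewrite inE => /eqP e; rewrite /d e divnn a0 -/(d r); lia.
  - case: (leqP (d r) 1) => [h1|dr1]; first by apply: leq_trans h1 _.
    have [i /andP[i1 iN] ei] := h r.
    have dri : d r = i by rewrite /d ei mulnK.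
    have [y ey] := getR i.-1 (hR i.-1 ltac:(lia)).
    apply: leq_trans (_ : (d y).+1 <= _); first by rewrite ey; lia.
    by rewrite ltnS; apply: one_le; rewrite ey; lia.
  - have [i iN ei] := h r.
    have dri : d r = 2 ^ i by rewrite /d ei mulnK.
    have key : forall j, j <= n -> 2 ^ j - 1 <= \sum_(x | d x < 2 ^ j) d x.
      elim=> [|j IH] jn; first by rewrite expn0.
      rewrite (bigID (fun x => d x < 2 ^ j)) /=.
      have [y ey] := getR (2 ^ j) (hR j ltac:(lia)).
      have e1 : \sum_(i0 | (d i0 < 2 ^ j.+1) && (d i0 < 2 ^ j)) d i0
               = \sum_(x | d x < 2 ^ j) d x.
        apply: eq_bigl => x; apply/andP/idP => [[]//|h2]; split => //.
        by apply: leq_trans h2 _; rewrite expnS leq_pmull.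
      have e2 : d y <= \sum_(i0 | (d i0 < 2 ^ j.+1) && ~~ (d i0 < 2 ^ j)) d i0.
        by apply: one_le; rewrite ey ltnn expnS andbT; rewrite -[X in X < _]mul1n ltn_pmul2r ?expn_gt0.
      rewrite e1; have := IH ltac:(lia); have := expnS 2 j; move: e2; rewrite ey.
      have := expn_gt0 2 j; lia.
    have := key i iN; rewrite dri; have := expn_gt0 2 i; lia.
set D := \sum_r d r.
have sumc : \sum_r c r = D * a by apply: sum_scale.
have -> : ((a%:R)^-1 * (\sum_r c r)%:R : rat)%R = (D%:R)%R.
  by rewrite sumc natrM mulrC mulfK // pnatr_eq0 -lt0n.
have splitD : forall S : {set rT}, D = \sum_(r in S) d r + \sum_(r in ~: S) d r.
  move=> S; rewrite /D (bigID (fun r => r \in S)) /=.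
  by congr (_ + _); apply: eq_bigl => r; rewrite ?inE.
have sumS : forall S : {set rT}, \sum_(r in S) c r = (\sum_(r in S) d r) * a.
  by move=> S; apply: sum_scale.
have eD : ((D%:R : rat) = (D%:Z)%:~R)%R by [].
rewrite eD ler_int; split.
  move=> [S [hF hM]].
  have := splitD S; rewrite !sumS in hF hM.
  set s := \sum_(r in S) d r; set t := \sum_(r in ~: S) d r => eDst.
  have f1 : (Num.ceil ((F%:R / a%:R) : rat) <= s%:Z)%R by rewrite ceil_le_nat.
  have f2 : (Num.ceil ((M%:R / a%:R) : rat) <= t%:Z)%R by rewrite ceil_le_nat.
  move: f1 f2; rewrite eDst; lia.
move=> hfm.
have g0 : forall X : nat, (0 <= Num.ceil ((X%:R / a%:R) : rat))%R.
  move=> X; rewrite ceil_ge0; apply: lt_le_trans (_ : 0 <= _)%R => //.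
  by apply: divr_ge0; rewrite ler0n.
have [fn efn] : exists fn : nat, Num.ceil (((F%:R)%R / (a%:R)%R) : rat) = (fn%:Z)%R.
  by exists `|Num.ceil (((F%:R)%R / (a%:R)%R) : rat)|%N; rewrite gez0_abs // g0.
have [mn emn] : exists mn : nat, Num.ceil (((M%:R)%R / (a%:R)%R) : rat) = (mn%:Z)%R.
  by exists `|Num.ceil (((M%:R)%R / (a%:R)%R) : rat)|%N; rewrite gez0_abs // g0.
have hF : F <= fn * a by rewrite -ceil_le_nat // efn.
have hM : M <= mn * a by rewrite -ceil_le_nat // emn.
move: hfm; rewrite efn emn => hfm.
have hle : fn + mn <= D by lia.
have eT : \sum_(r in [set: rT]) d r = D by apply: eq_bigl => r; rewrite in_setT.
have [S _ eS] := hcomp fn ltac:(rewrite eT; lia).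
exists S; rewrite !sumS eS; split => //.
have := splitD S; rewrite eS => e.
apply: leq_trans hM _; rewrite leq_mul2r; apply/orP; right; lia.
Qed.
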